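(* Let $(V,\{\nu_n\})$ be an $L^\infty$-MOS with unitization $(V_1,\{u_n\})$. For every $n$, $A\in M_n(V)_{sa}$ and $X\in(M_n)_{sa}$, the set $\{t>0: X_t\gg0,\ \nu_n(X_t^{-1/2}AX_t^{-1/2})\le1\}$ is nonempty, so $u_n(A,X)$ is a well-defined nonnegative real number. Moreover, for $B\in M_k(V)_{sa}$, $Y\in(M_k)_{sa}$ and $Z\in M_{n,k}$: $u_{n+k}((A\oplus B,X\oplus Y))=\max\{u_n(A,X),u_k(B,Y)\}$ and $u_k(Z^*AZ,Z^*XZ)\le\|Z\|^2u_n(A,X)$.
   Context: A gauge on a real vector space is a map $\nu$ into $[0,\infty)$ with $\nu(x+y)\le\nu(x)+\nu(y)$, $\nu(tx)=t\nu(x)$ ($t>0$); it is proper if $\nu(x)=\nu(-x)=0$ implies $x=0$. An $L^\infty$-matricially ordered space ($L^\infty$-MOS) is a complex $*$-vector space $V$ (with $M_n(V)$ carrying $(x_{ij})^*=(x_{ji}^* )$, and $M_n(V)_{sa}$ the self-adjoint part) together with proper gauges $\nu_n:M_n(V)_{sa}\to[0,\infty)$ such that $\nu_k(X^*AX)\le\|X\|^2\nu_n(A)$ for scalar $X\in M_{n,k}$, and $\nu_{n+k}(A\oplus B)=\max\{\nu_n(A),\nu_k(B)\}$. Unitization: $V_1=V\oplus\mathbb{C}$ with $M_{n,m}(V_1)$ identified with $M_{n,m}(V)\oplus M_{n,m}$ and $(A,X)^*=(A^*,X^* )$; for $X\in M_n$ set $X_t=tI_n-X$; for a scalar square matrix,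 $Y\gg0$ means $Y$ is positive and invertible; define $u_n(A,X)=\inf\{t>0:X_t\gg0,\ \nu_n(X_t^{-1/2}AX_t^{-1/2})\le1\}$ for $(A,X)\in M_n(V_1)_{sa}$. *)

(* Defs.v *)
(* Complex scalars: an arbitrary numClosedFieldType C whose
   real elements are Dedekind complete (hypothesis [real_complete C]); such a
   C is (isomorphic to) the field of complex numbers. *)
From HB Require Import structures.
From mathcomp Require Import all_boot all_order all_algebra.
From Stdlib Require Import ClassicalEpsilon.
Set Implicit Arguments. Unset Strict Implicit. Unset Printing Implicit Defensive.
Import Order.TTheory GRing.Theory Num.Theory.
Local Open Scope ring_scope.
Local Open Scope sesquilinear_scope.

Section Defs.
Variable C : numClosedFieldType.

Definition is_glb (S : C -> Prop) (g : C) :=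
  (forall x, S x -> g <= x) /\ (forall b, (forall x, S x -> b <= x) -> b <= g).
Definition is_lub (S : C -> Prop) (g : C) :=
  (forall x, S x -> x <= g) /\ (forall b, (forall x, S x -> x <= b) -> g <= b).

(* infimum / supremum (chosen via classical choice; meaningful when they exist) *)
Definition inf (S : C -> Prop) : C := epsilon (inhabits 0) (is_glb S).
Definition sup (S : C -> Prop) : C := epsilon (inhabits 0) (is_lub S).

Definition real_complete :=
  forall S : C -> Prop, (forall x, S x -> x \is Num.real) ->
    (exists x, S x) -> (exists b, forall x, S x -> b <= x) ->
    exists g, is_glb S g.

Definition vnorm n (v : 'cV[C]_n) : C := sqrtC (\sum_(i < n) `|v i 0| ^+ 2).
Definition opnorm m n (Z : 'M[C]_(m, n)) : C :=
  sup (fun r => exists v : 'cV[C]_n, vnorm v <= 1 /\ r = vnorm (Z *m v)).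

Definition psdmx n (Y : 'M[C]_n) :=
  Y \is hermsymmx /\ forall v : 'cV[C]_n, 0 <= (v ^t* *m Y *m v) 0 0.
Definition pdmx n (Y : 'M[C]_n) := psdmx Y /\ Y \in unitmx.
Definition msqrt n (Y : 'M[C]_n) : 'M[C]_n :=
  epsilon (inhabits 0) (fun S => psdmx S /\ S *m S = Y).

Variable V : lmodType C.

Definition is_star (star : V -> V) :=
  (forall (a : C) (x y : V), star (a *: x + y) = a^* *: star x + star y) /\
  involutive star.

Definition adjV (star : V -> V) m n (A : 'M[V]_(m, n)) : 'M[V]_(n, m) :=
  \matrix_(i, j) star (A j i).
Definition sa (star : V -> V) n (A : 'M[V]_n) := A = adjV star A.
Definition lrmul m n p q (L : 'M[C]_(m, n)) (A : 'M[V]_(n, p)) (R : 'M[C]_(p, q))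
  : 'M[V]_(m, q) :=
  \matrix_(i, j) \sum_(a < n) \sum_(b < p) (L i a * R b j) *: A a b.

(* L^oo-matricially ordered space: gauges nu_n on M_n(V)_sa (values of nu
   outside the self-adjoint part are irrelevant) *)
Definition Linf_MOS (star : V -> V) (nu : forall n, 'M[V]_n -> C) :=
  (forall n (A : 'M[V]_n), sa star A -> 0 <= nu n A) /\
      (forall n (A B : 'M[V]_n), sa star A -> sa star B ->
        nu n (A + B) <= nu n A + nu n B) /\
      (forall n (t : C) (A : 'M[V]_n), sa star A -> 0 < t ->
        nu n (map_mx (fun v => t *: v) A) = t * nu n A) /\
      (forall n (A : 'M[V]_n), sa star A -> nu n A = 0 -> nu n (- A) = 0 -> A = 0) /\
      (forall n k (X : 'M[C]_(n, k)) (A : 'M[V]_n), sa star A ->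
        nu k (lrmul (X ^t*) A X) <= opnorm X ^+ 2 * nu n A) /\
    (forall n k (A : 'M[V]_n) (B : 'M[V]_k), sa star A -> sa star B ->
        nu (n + k)%N (block_mx A 0 0 B) = Num.max (nu n A) (nu k B)).

Definition uset (nu : forall n, 'M[V]_n -> C) n (A : 'M[V]_n) (X : 'M[C]_n)
  : C -> Prop :=
  fun t => 0 < t /\ pdmx (t%:M - X) /\
    nu n (lrmul (invmx (msqrt (t%:M - X))) A (invmx (msqrt (t%:M - X)))) <= 1.
Definition unorm (nu : forall n, 'M[V]_n -> C) n (A : 'M[V]_n) (X : 'M[C]_n) : C :=
  inf (uset nu A X).

End Defs.

(* Main.v *)
Require Import Defs.
From HB Require Import structures.
From mathcomp Require Import all_boot all_order all_algebra.
From mathcomp Require Import ring.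
From Stdlib Require Import ClassicalEpsilon Classical.
Set Implicit Arguments. Unset Strict Implicit. Unset Printing Implicit Defensive.
Import Order.TTheory GRing.Theory Num.Theory.
Local Open Scope ring_scope.
Local Open Scope sesquilinear_scope.



Section Basics.
Variable C : numClosedFieldType.

Definition qf n (M : 'M[C]_n) (v : 'cV[C]_n) : C := (v ^t* *m M *m v) 0 0.
Definition nn n (v : 'cV[C]_n) : C := (v ^t* *m v) 0 0.

Lemma tcM m n p (A : 'M[C]_(m, n)) (B : 'M[C]_(n, p)) : (A *m B) ^t* = B ^t* *m A ^t*.
Proof. by rewrite trmx_mul map_mxM. Qed.

Lemma tcD m n (A B : 'M[C]_(m, n)) : (A + B) ^t* = A ^t* + B ^t*.
Proof. by rewrite linearD /= map_mxD. Qed.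

Lemma tcK m n (A : 'M[C]_(m, n)) : A ^t* ^t* = A.
Proof. exact: trmxCK. Qed.

Lemma tc1 n : (1%:M : 'M[C]_n) ^t* = 1%:M.
Proof. by rewrite trmx1 map_mx1. Qed.

Lemma tc0 m n : (0 : 'M[C]_(m, n)) ^t* = 0.
Proof. by rewrite trmx0 map_mx0. Qed.

Lemma tcZ m n a (A : 'M[C]_(m, n)) : (a *: A) ^t* = a^* *: A ^t*.
Proof. by rewrite linearZ /= map_mxZ. Qed.

Lemma herm_tc n (M : 'M[C]_n) : M \is hermsymmx -> M ^t* = M.
Proof. by move=> /is_hermitianmxP; rewrite expr0 scale1r => <-. Qed.

Lemma tc_herm n (M : 'M[C]_n) : M ^t* = M -> M \is hermsymmx.
Proof. by move=> h; apply/is_hermitianmxP; rewrite expr0 scale1r h. Qed.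

Lemma tc_inv n (M : 'M[C]_n) : (invmx M) ^t* = invmx (M ^t*).
Proof. by rewrite trmx_inv map_invmx. Qed.

Lemma nnE n (v : 'cV[C]_n) : nn v = \sum_i `|v i 0| ^+ 2.
Proof.
rewrite /nn mxE; apply: eq_bigr => i _.
by rewrite !mxE normCKC.
Qed.

Lemma nn_ge0 n (v : 'cV[C]_n) : 0 <= nn v.
Proof. by rewrite nnE sumr_ge0 // => i _; rewrite exprn_ge0. Qed.

Lemma nn_real n (v : 'cV[C]_n) : nn v \is Num.real.
Proof. exact/ger0_real/nn_ge0. Qed.

Lemma nn_eq0 n (v : 'cV[C]_n) : nn v = 0 -> v = 0.
Proof.
rewrite nnE => /eqP; rewrite psumr_eq0; last by move=> i _; rewrite exprn_ge0.
move=> /allP h; apply/matrixP => i j; rewrite ord1 mxE.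
have /implyP := h i (mem_index_enum i) => /(_ isT).
by rewrite sqrf_eq0 normr_eq0 => /eqP.
Qed.

Lemma nn_entry n (v : 'cV[C]_n) i : `|v i 0| ^+ 2 <= nn v.
Proof.
rewrite nnE (bigD1 i) //= lerDl sumr_ge0 // => j _; exact: exprn_ge0.
Qed.

Lemma qfE n (M : 'M[C]_n) v : qf M v = \sum_j \sum_i (v i 0)^* * M i j * v j 0.
Proof.
rewrite /qf mxE; apply: eq_bigr => j _; rewrite mxE mulr_suml.
by apply: eq_bigr => i _; rewrite !mxE.
Qed.

Lemma qfD n (M N : 'M[C]_n) v : qf (M + N) v = qf M v + qf N v.
Proof. by rewrite /qf mulmxDr mulmxDl mxE. Qed.

Lemma qfN n (M : 'M[C]_n) v : qf (- M) v = - qf M v.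
Proof. by rewrite /qf mulmxN mulNmx mxE. Qed.

Lemma qfB n (M N : 'M[C]_n) v : qf (M - N) v = qf M v - qf N v.
Proof. by rewrite qfD qfN. Qed.

Lemma qf_scalar n (a : C) (v : 'cV[C]_n) : qf a%:M v = a * nn v.
Proof. by rewrite /qf mul_mx_scalar -scalemxAl mxE. Qed.

Lemma qf_conj n (M : 'M[C]_(n, n)) k (Z : 'M[C]_(n, k)) v :
  qf (Z ^t* *m M *m Z) v = qf M (Z *m v).
Proof. by rewrite /qf tcM !mulmxA. Qed.

Lemma nn_mul n k (Z : 'M[C]_(n, k)) v : nn (Z *m v) = qf (Z ^t* *m Z) v.
Proof. by rewrite /nn /qf tcM !mulmxA. Qed.

Lemma nn_qf n (v : 'cV[C]_n) : nn v = qf 1%:M v.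
Proof. by rewrite /qf mulmx1. Qed.

Lemma qfZ n (M : 'M[C]_n) a v : qf M (a *: v) = `|a| ^+ 2 * qf M v.
Proof.
rewrite /qf tcZ -!scalemxAl -scalemxAr scalerA !mxE normCKC.
by rewrite /GRing.scale /=.
Qed.

Lemma nnZ n a (v : 'cV[C]_n) : nn (a *: v) = `|a| ^+ 2 * nn v.
Proof. by rewrite !nn_qf qfZ. Qed.

Lemma qf_herm_real n (M : 'M[C]_n) v : M \is hermsymmx -> qf M v \is Num.real.
Proof.
move=> /herm_tc hM; rewrite CrealE; apply/eqP.
have h : (v ^t* *m M *m v) ^t* = v ^t* *m M *m v.
  by rewrite tcM tcM tcK hM mulmxA.
by rewrite /qf -[in RHS]h !mxE.
Qed.

End Basics.



Section QB.
Variable C : numClosedFieldType.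

Lemma entry_prod_le n (v : 'cV[C]_n) i j : `|v i 0| * `|v j 0| <= nn v.
Proof.
have [a0 b0] := (normr_ge0 (v i 0), normr_ge0 (v j 0)).
case/orP: (real_leVge (normr_real (v i 0)) (normr_real (v j 0))) => h.
  apply: le_trans (nn_entry v j); rewrite expr2; exact: ler_pM.
apply: le_trans (nn_entry v i); rewrite expr2; exact: ler_pM.
Qed.

Lemma qf_bound n (M : 'M[C]_n) : exists c, 0 <= c /\ forall v, `|qf M v| <= c * nn v.
Proof.
exists (\sum_j \sum_i `|M i j|); split.
  by apply: sumr_ge0 => j _; apply: sumr_ge0 => i _.
move=> v; rewrite qfE mulr_suml; apply: le_trans (ler_norm_sum _ _ _) _.
apply: ler_sum => j _; rewrite mulr_suml; apply: le_trans (ler_norm_sum _ _ _) _.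
apply: ler_sum => i _; rewrite !normrM norm_conjC mulrC mulrA.
rewrite [X in _ <= X]mulrC ler_wpM2r //; exact: entry_prod_le.
Qed.

Lemma qf_herm_upper n (M : 'M[C]_n) : M \is hermsymmx ->
  exists c, 0 <= c /\ forall v, qf M v <= c * nn v.
Proof.
move=> hM; have [c [c0 hc]] := qf_bound M; exists c; split => // v.
exact: le_trans (real_ler_norm (qf_herm_real v hM)) (hc v).
Qed.

Lemma unit_of_inj n (M : 'M[C]_n) : (forall v : 'cV[C]_n, M *m v = 0 -> v = 0) ->
  M \in unitmx.
Proof.
move=> h; rewrite -unitmx_tr -row_free_unit -kermx_eq0; apply/eqP/matrixP => i j.
have hk := mulmx_ker (M ^T).
have : row i (kermx M^T) = 0.
  have e : (row i (kermx M^T)) *m M^T = 0 by rewrite -row_mul hk row0.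
  have e2 : M *m (row i (kermx M^T))^T = 0.
    by move/(congr1 trmx): e; rewrite trmx_mul trmxK trmx0.
  by move/(congr1 trmx): (h _ e2); rewrite trmxK trmx0.
by move=> /matrixP /(_ 0 j); rewrite !mxE.
Qed.

Lemma pd_crit n (M : 'M[C]_n) d : M \is hermsymmx -> 0 < d ->
  (forall v, d * nn v <= qf M v) -> pdmx M.
Proof.
move=> hM d0 hq; split; first split => //.
  move=> v; apply: le_trans (hq v); apply: mulr_ge0; [exact: ltW | exact: nn_ge0].
apply: unit_of_inj => v Mv; apply: nn_eq0; apply/eqP.
have : d * nn v <= 0 by rewrite (le_trans (hq v)) // /qf -mulmxA Mv mulmx0 mxE.
rewrite pmulr_rle0 // => h; rewrite eq_le h nn_ge0 //.
Qed.

End QB.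



Section Sqrt.
Variable C : numClosedFieldType.

Lemma qf_diag n (s : 'rV[C]_n) w :
  qf (diag_mx s) w = \sum_j `|w j 0| ^+ 2 * s 0 j.
Proof.
rewrite qfE; apply: eq_bigr => j _.
rewrite (bigD1 j) //= big1 ?addr0; last first.
  by move=> i /negbTE nij; rewrite !mxE nij mulr0n mulr0 mul0r.
by rewrite !mxE eqxx mulr1n normCKC mulrAC.
Qed.

Lemma qf_unit_conj n (P : 'M[C]_n) (M : 'M[C]_n) v : P \is unitarymx ->
  qf (invmx P *m M *m P) v = qf M (P *m v).
Proof.
move=> uP; rewrite invmx_unitary // -qf_conj //.
Qed.

Lemma psd_sqrt_exists n (T : 'M[C]_n) : psdmx T ->
  exists S, psdmx S /\ S *m S = T.
Proof.
move=> [hT pT].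
have nT := hermitian_normalmx hT.
have /orthomx_spectralP eT := nT.
set P := spectralmx T in eT; set d := spectral_diag T in eT.
have uP : P \is unitarymx := spectral_unitarymx T.
have unP : P \in unitmx := spectral_unit T.
have dreal : forall j, d 0 j \is Num.real.
  by move=> j; have /mxOverP := hermitian_spectral_diag_real hT; apply.
have dge0 : forall j, 0 <= d 0 j.
  move=> j; have := pT (P ^t* *m delta_mx j 0).
  rewrite -/(qf T _) {1}eT qf_unit_conj // mulmxA (unitarymxP uP) mul1mx.
  rewrite qf_diag (bigD1 j) //= big1 ?addr0.
    by rewrite mxE !eqxx /= normr1 expr1n mul1r.
  by move=> i /negbTE nij; rewrite mxE nij andbT normr0 expr0n mul0r.
set s := map_mx sqrtC d.
have sreal : forall j, (s 0 j)^* = s 0 j.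
  by move=> j; rewrite mxE conj_Creal // ger0_real // sqrtC_ge0.
exists (invmx P *m diag_mx s *m P); split; first split.
- apply: tc_herm; rewrite !tcM tc_inv -(invmx_unitary uP) invmxK.
  rewrite mulmxA; congr (_ *m _ *m _).
  rewrite tr_diag_mx map_diag_mx; congr diag_mx.
  apply/matrixP => i j; rewrite ord1 mxE; exact: sreal.
- move=> v; rewrite -/(qf _ _) qf_unit_conj // qf_diag.
  apply: sumr_ge0 => j _; rewrite mulr_ge0 ?exprn_ge0 // mxE sqrtC_ge0 //.
- rewrite [in RHS]eT -!mulmxA; congr (_ *m _); rewrite !mulmxA mulmxK //.
  congr (_ *m _); apply/matrixP => i j; rewrite mul_diag_mx !mxE.
  case: (eqVneq i j) => [->|nij]; last by rewrite !mulr0n mulr0.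
  by rewrite !mulr1n -expr2 sqrtCK.
Qed.

End Sqrt.



Section Opnorm.
Variable C : numClosedFieldType.
Hypothesis rc : real_complete C.

Lemma inf_glb (S : C -> Prop) : (forall x, S x -> x \is Num.real) ->
  (exists x, S x) -> (exists b, forall x, S x -> b <= x) -> is_glb S (inf S).
Proof.
move=> hr hne hb; have [g hg] := rc hr hne hb.
by apply: (epsilon_spec (inhabits 0) (is_glb S)); exists g.
Qed.

Lemma sup_lub (S : C -> Prop) : (forall x, S x -> x \is Num.real) ->
  (exists x, S x) -> (exists b, forall x, S x -> x <= b) -> is_lub S (sup S).
Proof.
move=> hr [x0 hx0] [b hb].
have [g [hg1 hg2]] : exists g, is_glb (fun y => S (- y)) g.
  apply: rc.
  - by move=> y /hr; rewrite realN.
  - by exists (- x0); rewrite opprK.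
  - by exists (- b) => y /hb; rewrite lerNl.
apply: (epsilon_spec (inhabits 0) (is_lub S)); exists (- g); split.
  by move=> x hx; rewrite lerNr; apply: hg1; rewrite opprK.
by move=> b' hb'; rewrite lerNl; apply: hg2 => y /hb'; rewrite lerNl.
Qed.

Lemma vnormE n (v : 'cV[C]_n) : vnorm v = sqrtC (nn v).
Proof. by rewrite /vnorm nnE. Qed.

Lemma sqrtC_le (x y : C) : 0 <= x -> x <= y -> sqrtC x <= sqrtC y.
Proof. by move=> x0 xy; rewrite ler_sqrtC // nnegrE // (le_trans x0 xy). Qed.

Lemma le_sq_of_sqrtC (x y : C) : 0 <= x -> sqrtC x <= y -> x <= y ^+ 2.
Proof.
move=> x0 h; have s0 : 0 <= sqrtC x by rewrite sqrtC_ge0.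
by rewrite -(sqrtCK x) !expr2 ler_pM.
Qed.

Lemma nn_le1 n (v : 'cV[C]_n) : vnorm v <= 1 -> nn v <= 1.
Proof.
by move=> h; rewrite vnormE in h; have := le_sq_of_sqrtC (nn_ge0 v) h; rewrite expr1n.
Qed.

Definition onset m n (Z : 'M[C]_(m, n)) :=
  fun r => exists v : 'cV[C]_n, vnorm v <= 1 /\ r = vnorm (Z *m v).

Lemma opnorm_lub m n (Z : 'M[C]_(m, n)) : is_lub (onset Z) (opnorm Z).
Proof.
apply: sup_lub.
- by move=> r [v [_ ->]]; rewrite vnormE ger0_real // sqrtC_ge0 nn_ge0.
- by exists (vnorm (Z *m 0)), 0; split => //; rewrite vnormE /nn trmx0 map_mx0 mul0mx mxE sqrtC0.
- have [c [c0 hc]] := qf_bound (Z ^t* *m Z).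
  exists (sqrtC c) => r [v [hv ->]]; rewrite vnormE; apply: sqrtC_le; first exact: nn_ge0.
  rewrite nn_mul; apply: le_trans (real_ler_norm _) _.
    by rewrite -nn_mul nn_real.
  apply: le_trans (hc v) _; rewrite -[X in _ <= X]mulr1 ler_wpM2l //.
  apply: nn_le1; by rewrite vnormE in hv *.
Qed.

Lemma opnorm_ge0 m n (Z : 'M[C]_(m, n)) : 0 <= opnorm Z.
Proof.
have [h _] := opnorm_lub Z; apply: h; exists 0; split.
  by rewrite vnormE /nn trmx0 map_mx0 mul0mx mxE sqrtC0.
by rewrite mulmx0 vnormE /nn trmx0 map_mx0 mul0mx mxE sqrtC0.
Qed.

Lemma opnorm_le m n (Z : 'M[C]_(m, n)) r : 0 <= r ->
  (forall v, nn (Z *m v) <= r ^+ 2 * nn v) -> opnorm Z <= r.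
Proof.
move=> r0 h; have [_ h2] := opnorm_lub Z; apply: h2 => x [v [hv ->]].
rewrite vnormE; apply: le_trans (sqrtC_le (nn_ge0 _) (h v)) _.
rewrite sqrtCM ?nnegrE ?exprn_ge0 ?nn_ge0 // sqrCK // -vnormE.
by rewrite -[X in _ <= X]mulr1 ler_wpM2l.
Qed.

Lemma opnorm_bound m n (Z : 'M[C]_(m, n)) v : nn (Z *m v) <= opnorm Z ^+ 2 * nn v.
Proof.
have [N0|Npos] := eqVneq (nn v) 0.
  by rewrite N0 mulr0 (nn_eq0 N0) mulmx0 /nn trmx0 map_mx0 mul0mx mxE.
have Ngt : 0 < nn v by rewrite lt_def Npos nn_ge0.
set r := sqrtC (nn v).
have r0 : 0 < r by rewrite sqrtC_gt0.
have rr : `|r^-1| ^+ 2 = (nn v)^-1.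
  by rewrite normfV ger0_norm ?ltW // exprVn sqrtCK.
have [h _] := opnorm_lub Z.
have hw : vnorm (Z *m (r^-1 *: v)) <= opnorm Z.
  apply: h; exists (r^-1 *: v); split => //.
  by rewrite vnormE nnZ rr mulVf // sqrtC1.
rewrite vnormE in hw; have := le_sq_of_sqrtC (nn_ge0 _) hw.
rewrite -scalemxAr nnZ rr => H.
by rewrite mulrC -ler_pdivrMl // mulrC.
Qed.

End Opnorm.



Section Lrmul.
Variable C : numClosedFieldType.
Variable V : lmodType C.

Lemma lrmulD m n p q (L : 'M[C]_(m, n)) (A B : 'M[V]_(n, p)) (R : 'M[C]_(p, q)) :
  lrmul L (A + B) R = lrmul L A R + lrmul L B R.
Proof.
apply/matrixP => i j; rewrite !mxE -big_split; apply: eq_bigr => a _.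
rewrite -big_split; apply: eq_bigr => b _; by rewrite mxE scalerDr.
Qed.

Lemma lrmul0L m n p q (A : 'M[V]_(n, p)) (R : 'M[C]_(p, q)) :
  lrmul (0 : 'M[C]_(m, n)) A R = 0.
Proof.
apply/matrixP => i j; rewrite !mxE big1 // => a _; rewrite big1 // => b _.
by rewrite mxE mul0r scale0r.
Qed.

Lemma lrmulM m n p q m' q' (L : 'M[C]_(m', m)) (L' : 'M[C]_(m, n)) (A : 'M[V]_(n, p))
  (R' : 'M[C]_(p, q)) (R : 'M[C]_(q, q')) :
  lrmul L (lrmul L' A R') R = lrmul (L *m L') A (R' *m R).
Proof.
apply/matrixP => i j; rewrite !mxE.
under eq_bigr => a _ do under eq_bigr => b _ do rewrite mxE scaler_sumr; rewrite /=.
under eq_bigr => a _ do rewrite exchange_big /=.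
rewrite exchange_big /=; apply: eq_bigr => c _.
under eq_bigr => a _ do under eq_bigr => b _ do rewrite scaler_sumr; rewrite /=.
under eq_bigr => a _ do rewrite exchange_big /=.
rewrite exchange_big /=; apply: eq_bigr => d _.
rewrite !mxE mulr_suml scaler_suml; apply: eq_bigr => a _.
rewrite mulr_sumr scaler_suml; apply: eq_bigr => b _.
by rewrite scalerA mulrACA [R b j * _]mulrC.
Qed.

Lemma lrmul_entry_delta m n p q (L : 'M[C]_(m, n)) (A : 'M[V]_(n, p)) (R : 'M[C]_(p, q))
  i j i0 j0 : (forall a, L i a = (a == i0)%:R) -> (forall b, R b j = (b == j0)%:R) ->
  lrmul L A R i j = A i0 j0.
Proof.
move=> hL hR; rewrite mxE (bigD1 i0) //= [X in _ + X]big1 ?addr0.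
  rewrite (bigD1 j0) //= [X in _ + X]big1 ?addr0.
    by rewrite hL hR !eqxx mulr1 scale1r.
  by move=> b /negbTE nb; rewrite hR nb mulr0 scale0r.
move=> a /negbTE na; rewrite big1 // => b _; by rewrite hL na mul0r scale0r.
Qed.

Lemma lrmul_entry0L m n p q (L : 'M[C]_(m, n)) (A : 'M[V]_(n, p)) (R : 'M[C]_(p, q))
  i j : (forall a, L i a = 0) -> lrmul L A R i j = 0.
Proof.
move=> hL; rewrite mxE big1 // => a _; rewrite big1 // => b _.
by rewrite hL mul0r scale0r.
Qed.

Lemma lrmul_entry0R m n p q (L : 'M[C]_(m, n)) (A : 'M[V]_(n, p)) (R : 'M[C]_(p, q))
  i j : (forall b, R b j = 0) -> lrmul L A R i j = 0.
Proof.
move=> hR; rewrite mxE big1 // => a _; rewrite big1 // => b _.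
by rewrite hR mulr0 scale0r.
Qed.

Lemma lrmul1 n p (A : 'M[V]_(n, p)) : lrmul 1%:M A 1%:M = A.
Proof.
apply/matrixP => i j; apply: lrmul_entry_delta => a; rewrite !mxE //.
by rewrite eq_sym.
Qed.

Definition ZL n k : 'M[C]_(n + k, n) := col_mx 1%:M 0.
Definition ZR n k : 'M[C]_(n + k, k) := col_mx 0 1%:M.

Lemma block_decomp n k (A : 'M[V]_n) (B : 'M[V]_k) :
  block_mx A 0 0 B = lrmul (ZL n k) A (ZL n k)^T + lrmul (ZR n k) B (ZR n k)^T.
Proof.
apply/matrixP => i j; rewrite [RHS]mxE.
case: (split_ordP i) => i' ->; case: (split_ordP j) => j' ->.
- rewrite block_mxEul (lrmul_entry_delta _ _ (i0 := i') (j0 := j')).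
  + by rewrite lrmul_entry0L ?addr0 // => a; rewrite /ZR col_mxEu mxE.
  + by move=> a; rewrite /ZL col_mxEu mxE eq_sym.
  + by move=> b; rewrite /ZL mxE col_mxEu mxE eq_sym.
- rewrite block_mxEur mxE lrmul_entry0R ?lrmul_entry0L ?addr0 //.
  + by move=> a; rewrite /ZR col_mxEu mxE.
  + by move=> b; rewrite /ZL mxE col_mxEd mxE.
- rewrite block_mxEdl mxE lrmul_entry0L ?lrmul_entry0R ?addr0 //.
  + by move=> b; rewrite /ZR mxE col_mxEu mxE.
  + by move=> a; rewrite /ZL col_mxEd mxE.
- rewrite block_mxEdr [X in X + _]lrmul_entry0L ?add0r; last first.
    by move=> a; rewrite /ZL col_mxEd mxE.
  symmetry; apply: lrmul_entry_delta => [a|b].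
    by rewrite /ZR col_mxEd mxE eq_sym.
  by rewrite /ZR mxE col_mxEd mxE eq_sym.
Qed.

End Lrmul.



Section Star.
Variable C : numClosedFieldType.
Variable V : lmodType C.
Variable star : V -> V.
Hypothesis hs : is_star star.

Lemma starD x y : star (x + y) = star x + star y.
Proof. by have [h _] := hs; rewrite -{1}[x]scale1r h conjC1 scale1r. Qed.

Lemma star0 : star 0 = 0.
Proof.
have e := starD 0 0; rewrite addr0 in e.
by apply: (@addrI _ (star 0)); rewrite addr0 -e.
Qed.

Lemma starZ a x : star (a *: x) = a^* *: star x.
Proof. by have [h _] := hs; rewrite -[a *: x]addr0 h star0 addr0. Qed.

Lemma star_sum (I : Type) (r : seq I) (F : I -> V) :
  star (\sum_(i <- r) F i) = \sum_(i <- r) star (F i).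
Proof. exact: (big_morph _ starD star0). Qed.

Lemma sa_entry n (A : 'M[V]_n) : sa star A -> forall i j, star (A i j) = A j i.
Proof. by move=> h i j; rewrite [in RHS]h mxE. Qed.

Lemma sa_of_entry n (A : 'M[V]_n) : (forall i j, star (A i j) = A j i) -> sa star A.
Proof. by move=> h; apply/matrixP => i j; rewrite mxE h. Qed.

Lemma sa_add n (A B : 'M[V]_n) : sa star A -> sa star B -> sa star (A + B).
Proof.
move=> hA hB; apply: sa_of_entry => i j.
by rewrite !mxE starD !sa_entry.
Qed.

Lemma sa_lrmul n k (A : 'M[V]_n) (R : 'M[C]_(n, k)) :
  sa star A -> sa star (lrmul (R ^t*) A R).
Proof.
move=> hA; apply: sa_of_entry => i j; rewrite !mxE star_sum.
rewrite exchange_big /=; apply: eq_bigr => b _; rewrite star_sum; apply: eq_bigr => a _.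
rewrite starZ sa_entry // !mxE.
by rewrite rmorphM /= conjCK mulrC.
Qed.

Lemma ZL_tc n k : (ZL C n k) ^t* = (ZL C n k)^T.
Proof. by rewrite /ZL tr_col_mx map_row_mx trmx1 trmx0 map_mx1 map_mx0. Qed.

Lemma ZR_tc n k : (ZR C n k) ^t* = (ZR C n k)^T.
Proof. by rewrite /ZR tr_col_mx map_row_mx trmx1 trmx0 map_mx1 map_mx0. Qed.

Lemma sa_block n k (A : 'M[V]_n) (B : 'M[V]_k) :
  sa star A -> sa star B -> sa star (block_mx A 0 0 B).
Proof.
move=> hA hB; rewrite block_decomp; apply: sa_add.
  by have := sa_lrmul (ZL C n k)^T hA; rewrite -ZL_tc tcK.
by have := sa_lrmul (ZR C n k)^T hB; rewrite -ZR_tc tcK.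
Qed.

End Star.



Section Main1.
Variable C : numClosedFieldType.
Variable V : lmodType C.
Variable star : V -> V.
Local Unset Implicit Arguments.
Variable nu : forall n : nat, 'M[V]_n -> C.
Local Set Implicit Arguments.
Hypothesis rc : real_complete C.
Hypothesis hs : is_star star.
Hypothesis hL : Linf_MOS star nu.

Lemma nu_ge0 n (A : 'M[V]_n) : sa star A -> 0 <= nu n A.
Proof. by case: hL => h _; apply: h. Qed.

Lemma nu_comp n k (X : 'M[C]_(n, k)) (A : 'M[V]_n) : sa star A ->
  nu k (lrmul (X ^t*) A X) <= opnorm X ^+ 2 * nu n A.
Proof. by case: hL => _ [_ [_ [_ [h _]]]]; apply: h. Qed.

Lemma nu_block n k (A : 'M[V]_n) (B : 'M[V]_k) : sa star A -> sa star B ->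
  nu (n + k)%N (block_mx A 0 0 B) = Num.max (nu n A) (nu k B).
Proof. by case: hL => _ [_ [_ [_ [_ h]]]]; apply: h. Qed.

Lemma msqrt_spec n (T : 'M[C]_n) : psdmx T -> psdmx (msqrt T) /\ msqrt T *m msqrt T = T.
Proof.
move=> hT; have [S hS] := psd_sqrt_exists hT.
by apply: (epsilon_spec (inhabits 0) (fun S => psdmx S /\ S *m S = T)); exists S.
Qed.

Lemma root_props n (T : 'M[C]_n) : pdmx T ->
  (msqrt T) ^t* = msqrt T /\ msqrt T \in unitmx /\ msqrt T *m msqrt T = T.
Proof.
move=> [pT uT]; have [[hS _] eS] := msqrt_spec pT.
split; first exact: herm_tc.
split => //; have : msqrt T *m msqrt T \in unitmx by rewrite eS.
by rewrite unitmx_mul => /andP[].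
Qed.

Lemma pd_of_root n (S : 'M[C]_n) : S ^t* = S -> S \in unitmx -> pdmx (S *m S).
Proof.
move=> hS uS; split; last by rewrite unitmx_mul uS.
split; first by apply: tc_herm; rewrite tcM hS.
by move=> v; rewrite -/(qf _ _) -{1}hS -nn_mul nn_ge0.
Qed.

Lemma sa_inv n (A : 'M[V]_n) (S : 'M[C]_n) : sa star A -> S ^t* = S ->
  sa star (lrmul (invmx S) A (invmx S)).
Proof.
move=> hA hS; have := sa_lrmul hs (invmx S) hA.
by rewrite tc_inv hS.
Qed.

Lemma ML n k (A : 'M[V]_n) (Z : 'M[C]_(n, k)) (S : 'M[C]_n) (S' : 'M[C]_k) :
  sa star A -> S ^t* = S -> S \in unitmx -> S' ^t* = S' -> S' \in unitmx ->
  (forall v, qf (Z ^t* *m (S *m S) *m Z) v <= qf (S' *m S') v) ->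
  nu k (lrmul (invmx S') (lrmul (Z ^t*) A Z) (invmx S'))
    <= nu n (lrmul (invmx S) A (invmx S)).
Proof.
move=> hA hS uS hS' uS' hq.
set W := S *m Z *m invmx S'.
have hW : W ^t* = invmx S' *m Z ^t* *m S by rewrite /W !tcM tc_inv hS hS' mulmxA.
have e : lrmul (invmx S') (lrmul (Z ^t*) A Z) (invmx S') =
         lrmul (W ^t*) (lrmul (invmx S) A (invmx S)) W.
  rewrite !lrmulM hW /W -!mulmxA mulmxV // mulmx1 !mulmxA mulVmx // mul1mx //.
rewrite e; apply: le_trans (nu_comp _ (sa_inv hA hS)) _.
have op1 : opnorm W <= 1.
  apply: opnorm_le => // v; rewrite expr1n mul1r.
  have -> : S *m Z *m invmx S' *m v = S *m (Z *m (invmx S' *m v)) by rewrite !mulmxA.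
  rewrite nn_mul hS -(qf_conj (S *m S) Z); apply: le_trans (hq _) _.
  rewrite (_ : qf (S' *m S') _ = nn (S' *m (invmx S' *m v))); last by rewrite nn_mul hS'.
  by rewrite mulmxA mulmxV // mul1mx.
rewrite -[X in _ <= X]mul1r ler_wpM2r //; first exact: nu_ge0 (sa_inv hA hS).
by rewrite exprn_ile1 ?opnorm_ge0.
Qed.


Lemma tc_scalar n (a : C) : (a%:M : 'M[C]_n) ^t* = (a^*)%:M.
Proof. by rewrite tr_scalar_mx map_scalar_mx. Qed.

Lemma herm_shift n (t : C) (X : 'M[C]_n) : t \is Num.real -> X \is hermsymmx ->
  t%:M - X \is hermsymmx.
Proof.
move=> tr hX; apply: tc_herm; rewrite tcD tc_scalar conj_Creal //.
by rewrite linearN /= map_mxN herm_tc.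
Qed.

Lemma qf_shift n (t : C) (X : 'M[C]_n) v : qf (t%:M - X) v = t * nn v - qf X v.
Proof. by rewrite qfB qf_scalar. Qed.

Lemma ML_uset n k (A : 'M[V]_n) (X : 'M[C]_n) (Z : 'M[C]_(n, k)) (X' : 'M[C]_k) t s :
  sa star A -> uset nu A X t -> 0 < s -> pdmx (s%:M - X') ->
  (forall v, qf (Z ^t* *m (t%:M - X) *m Z) v <= qf (s%:M - X') v) ->
  uset nu (lrmul (Z ^t*) A Z) X' s.
Proof.
move=> hA [t0 [pT hnu]] s0 pT' hq; split => //; split => //.
have [hS [uS eS]] := root_props pT; have [hS' [uS' eS']] := root_props pT'.
apply: le_trans (ML hA hS uS hS' uS' _) hnu.
by move=> v; rewrite eS eS'.
Qed.

Lemma uset_up n (A : 'M[V]_n) (X : 'M[C]_n) t t' : sa star A -> X \is hermsymmx ->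
  uset nu A X t -> t < t' -> uset nu A X t'.
Proof.
move=> hA hX ht tt'.
have [t0 [[[_ psdT] _] _]] := ht.
have t'0 : 0 < t' := lt_trans t0 tt'.
have key : forall v, qf (t%:M - X) v + (t' - t) * nn v = qf (t'%:M - X) v.
  by move=> v; rewrite !qf_shift; ring.
have := @ML_uset n n A X 1%:M X t t' hA ht t'0.
rewrite tc1 lrmul1; apply.
  apply: (pd_crit (d := t' - t)); first by apply: herm_shift => //; exact: gtr0_real.
    by rewrite subr_gt0.
  by move=> v; rewrite -key lerDr; apply: psdT.
move=> v; rewrite mul1mx mulmx1 -key lerDl mulr_ge0 ?nn_ge0 //.
by rewrite subr_ge0 ltW.
Qed.

Lemma herm_comp n k (X : 'M[C]_n) (Z : 'M[C]_(n, k)) : X \is hermsymmx ->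
  Z ^t* *m X *m Z \is hermsymmx.
Proof. by move=> hX; apply: tc_herm; rewrite !tcM tcK herm_tc // mulmxA. Qed.

Lemma uset_comp n k (A : 'M[V]_n) (X : 'M[C]_n) (Z : 'M[C]_(n, k)) t s :
  sa star A -> X \is hermsymmx -> uset nu A X t -> opnorm Z ^+ 2 * t < s ->
  uset nu (lrmul (Z ^t*) A Z) (Z ^t* *m X *m Z) s.
Proof.
move=> hA hX ht hs'.
have [t0 [[[_ psdT] _] _]] := ht.
have op0 : 0 <= opnorm Z ^+ 2 * t by rewrite mulr_ge0 ?exprn_ge0 ?(opnorm_ge0 rc) // ltW.
have s0 : 0 < s := le_lt_trans op0 hs'.
have b1 : forall v, (s - opnorm Z ^+ 2 * t) * nn v <= s * nn v - t * nn (Z *m v).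
  move=> v; rewrite mulrBl lerB // mulrAC [X in _ <= X]mulrC ler_wpM2l //; try exact: ltW.
  exact: (opnorm_bound rc).
have b2 : forall v, 0 <= t * nn (Z *m v) - qf X (Z *m v).
  by move=> v; have := psdT (Z *m v); rewrite -/(qf _ _) qf_shift.
have key : forall v, qf (s%:M - Z ^t* *m X *m Z) v =
   (s * nn v - t * nn (Z *m v)) + (t * nn (Z *m v) - qf X (Z *m v)).
  by move=> v; rewrite qf_shift qf_conj; ring.
apply: (ML_uset (X := X) (t := t)) => //.
  apply: (pd_crit (d := s - opnorm Z ^+ 2 * t)).
  - by apply: herm_shift; [exact: gtr0_real | exact: herm_comp].
  - by rewrite subr_gt0.
  - by move=> v; rewrite key; apply: ler_wpDr => //.
move=> v; rewrite qf_conj qf_shift key lerDr.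
apply: le_trans (b1 v); rewrite mulr_ge0 ?nn_ge0 // subr_ge0 ltW //.
Qed.

Lemma uset_nonempty n (A : 'M[V]_n) (X : 'M[C]_n) : sa star A -> X \is hermsymmx ->
  exists t, uset nu A X t.
Proof.
move=> hA hX; have [c [c0 hc]] := qf_herm_upper hX.
set d := 1 + nu n A.
have d0 : 0 < d by apply: lt_le_trans ltr01 _; rewrite lerDl nu_ge0.
have t0 : 0 < c + d by apply: ltr_wpDl.
have hb : forall v, d * nn v <= qf ((c + d)%:M - X) v.
  move=> v; rewrite qf_shift (_ : (c + d) * nn v - qf X v = d * nn v + (c * nn v - qf X v)); last by ring.
  by rewrite lerDl subr_ge0; exact: hc.
have pT : pdmx ((c + d)%:M - X).
  apply: (pd_crit (d := d)) => //.
  by apply: herm_shift => //; exact: gtr0_real.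
exists (c + d); split => //; split => //.
have [hS [uS eS]] := root_props pT.
set S := msqrt _ in hS uS eS *.
have := nu_comp (invmx S) hA; rewrite tc_inv hS => h; apply: le_trans h _.
have hop : opnorm (invmx S) <= sqrtC d^-1.
  apply: (opnorm_le rc); first by rewrite sqrtC_ge0 invr_ge0 ltW.
  move=> v; rewrite sqrtCK ler_pdivlMl //.
  apply: le_trans (hb _) _; rewrite -eS.
  rewrite (_ : qf (S *m S) _ = nn (S *m (invmx S *m v))); last by rewrite nn_mul hS.
  by rewrite mulmxA mulmxV // mul1mx.
have op2 : opnorm (invmx S) ^+ 2 <= d^-1.
  rewrite -[d^-1]sqrtCK expr2 [X in _ <= X]expr2; apply: ler_pM => //; exact: (opnorm_ge0 rc).
apply: le_trans (ler_wpM2r (nu_ge0 hA) op2) _.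
by rewrite ler_pdivrMl // mulr1 lerDr.
Qed.

Lemma unorm_glb n (A : 'M[V]_n) (X : 'M[C]_n) : sa star A -> X \is hermsymmx ->
  is_glb (uset nu A X) (unorm nu A X).
Proof.
move=> hA hX; apply: (inf_glb rc).
- by move=> t [t0 _]; exact: gtr0_real.
- exact: uset_nonempty.
- by exists 0 => t [t0 _]; exact: ltW.
Qed.

Lemma unorm_ge0 n (A : 'M[V]_n) (X : 'M[C]_n) : sa star A -> X \is hermsymmx ->
  0 <= unorm nu A X.
Proof.
move=> hA hX; have [_ h] := unorm_glb hA hX; apply: h => t [t0 _]; exact: ltW.
Qed.

Lemma le_of_forall_gt (g m : C) : g \is Num.real -> m \is Num.real ->
  (forall s, m < s -> g <= s) -> g <= m.
Proof.
move=> gr mr h; case: (boolP (g <= m)) => // ngm.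
have mg : m < g by rewrite real_ltNge.
have [h1 h2] := midf_lt mg.
by have := le_lt_trans (h _ h1) h2; rewrite ltxx.
Qed.

Lemma max_le (x y z : C) : x <= z -> y <= z -> Num.max x y <= z.
Proof. by move=> hx hy; rewrite /Order.max; case: ifP. Qed.

Lemma max_lt (x y s : C) : x \is Num.real -> y \is Num.real -> Num.max x y < s ->
  x < s /\ y < s.
Proof.
move=> xr yr; rewrite /Order.max; case: ifP => h hs0.
  by split => //; exact: lt_trans h hs0.
have yx : y <= x by rewrite real_leNgt // h.
by split => //; exact: le_lt_trans yx hs0.
Qed.

Lemma unorm_comp n k (A : 'M[V]_n) (X : 'M[C]_n) (Z : 'M[C]_(n, k)) :
  sa star A -> X \is hermsymmx ->
  unorm nu (lrmul (Z ^t*) A Z) (Z ^t* *m X *m Z) <= opnorm Z ^+ 2 * unorm nu A X.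
Proof.
move=> hA hX.
have hA' := sa_lrmul hs Z hA; have hX' := herm_comp Z hX.
have [lb' _] := unorm_glb hA' hX'.
have [lb gl] := unorm_glb hA hX.
have o0 : 0 <= opnorm Z ^+ 2 by rewrite exprn_ge0 // (opnorm_ge0 rc).
have H1 : forall t, uset nu A X t ->
    unorm nu (lrmul (Z ^t*) A Z) (Z ^t* *m X *m Z) <= opnorm Z ^+ 2 * t.
  move=> t ht; have [t0 _] := ht.
  apply: le_of_forall_gt.
  - exact: ger0_real (unorm_ge0 hA' hX').
  - by apply: ger0_real; rewrite mulr_ge0 // ltW.
  - by move=> s hs0; apply: lb'; exact: (uset_comp hA hX ht hs0).
have [t ht] := uset_nonempty hA hX.
case: (eqVneq (opnorm Z ^+ 2) 0) => [o_eq|o_ne].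
  by have := H1 t ht; rewrite o_eq !mul0r.
have opos : 0 < opnorm Z ^+ 2 by rewrite lt_def o_ne o0.
rewrite -ler_pdivrMl //; apply: gl => t' ht'.
by rewrite ler_pdivrMl //; exact: H1.
Qed.

Lemma uset_block n k (A : 'M[V]_n) (X : 'M[C]_n) (B : 'M[V]_k) (Y : 'M[C]_k) s :
  sa star A -> sa star B -> uset nu A X s -> uset nu B Y s ->
  uset nu (block_mx A 0 0 B) (block_mx X 0 0 Y) s.
Proof.
move=> hA hB [s0 [pT1 h1]] [_ [pT2 h2]].
have [hS1 [uS1 eS1]] := root_props pT1; have [hS2 [uS2 eS2]] := root_props pT2.
move: h1 h2 hS1 uS1 eS1 hS2 uS2 eS2.
set S1 := msqrt _; set S2 := msqrt _ => h1 h2 hS1 uS1 eS1 hS2 uS2 eS2.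
set D := block_mx S1 0 0 S2.
set E := block_mx (invmx S1) 0 0 (invmx S2).
have DE : D *m E = 1%:M.
  by rewrite /D /E mulmx_block !mulmx0 !mul0mx !addr0 !add0r !mulmxV // -scalar_mx_block.
have uD : D \in unitmx by case: (mulmx1_unit DE).
have iD : invmx D = E by rewrite -(mulKmx uD E) DE mulmx1.
have hD : D ^t* = D by rewrite /D tr_block_mx map_block_mx hS1 hS2 !tc0.
have eD : D *m D = s%:M - block_mx X 0 0 Y.
  rewrite /D mulmx_block !mulmx0 !mul0mx !addr0 !add0r eS1 eS2.
  by rewrite (scalar_mx_block n k) opp_block_mx add_block_mx !oppr0 !addr0.
have pT : pdmx (s%:M - block_mx X 0 0 Y) by rewrite -eD; exact: pd_of_root.
split => //; split => //.
have [hS' [uS' eS']] := root_props pT.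
have := ML (Z := 1%:M) (sa_block hs hA hB) hD uD hS' uS'.
rewrite tc1 lrmul1 => h; apply: le_trans (h _) _.
  by move=> v; rewrite mul1mx mulmx1 eD eS'.
rewrite iD.
have e1 : E *m ZL C n k = ZL C n k *m invmx S1.
  by rewrite /E /ZL mul_block_col mul_col_mx ?mulmx1 ?mul1mx ?mulmx0 ?mul0mx ?addr0 ?add0r.
have e2 : (ZL C n k)^T *m E = invmx S1 *m (ZL C n k)^T.
  by rewrite /E /ZL tr_col_mx trmx1 trmx0 mul_row_block mul_mx_row ?mulmx1 ?mul1mx ?mulmx0 ?mul0mx ?addr0 ?add0r.
have e3 : E *m ZR C n k = ZR C n k *m invmx S2.
  by rewrite /E /ZR mul_block_col mul_col_mx ?mulmx1 ?mul1mx ?mulmx0 ?mul0mx ?addr0 ?add0r.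
have e4 : (ZR C n k)^T *m E = invmx S2 *m (ZR C n k)^T.
  by rewrite /E /ZR tr_col_mx trmx1 trmx0 mul_row_block mul_mx_row ?mulmx1 ?mul1mx ?mulmx0 ?mul0mx ?addr0 ?add0r.
rewrite block_decomp lrmulD !lrmulM e1 e2 e3 e4 -!lrmulM -block_decomp.
rewrite nu_block; [exact: max_le h1 h2 | exact: sa_inv hA hS1 | exact: sa_inv hB hS2].
Qed.

Lemma exists_below (S : C -> Prop) g s : is_glb S g -> g < s ->
  (forall x, S x -> x \is Num.real) -> s \is Num.real -> exists a, S a /\ a < s.
Proof.
move=> [_ gl] gs hr sr; case: (classic (exists a, S a /\ a < s)) => // nex.
exfalso; have : s <= g.
  apply: gl => x Sx; case: (boolP (s <= x)) => // nsx.
  by exfalso; apply: nex; exists x; split => //; rewrite real_ltNge // hr.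
by move=> sg; have := le_lt_trans sg gs; rewrite ltxx.
Qed.

Lemma ZLL n k : (ZL C n k)^T *m ZL C n k = 1%:M.
Proof. by rewrite /ZL tr_col_mx trmx1 trmx0 mul_row_col mulmx1 mul0mx addr0. Qed.
Lemma ZRR n k : (ZR C n k)^T *m ZR C n k = 1%:M.
Proof. by rewrite /ZR tr_col_mx trmx1 trmx0 mul_row_col mulmx1 mul0mx add0r. Qed.
Lemma ZLR n k : (ZL C n k)^T *m ZR C n k = 0.
Proof. by rewrite /ZL /ZR tr_col_mx trmx1 trmx0 mul_row_col mulmx0 mul0mx addr0. Qed.
Lemma ZRL n k : (ZR C n k)^T *m ZL C n k = 0.
Proof. by rewrite /ZL /ZR tr_col_mx trmx1 trmx0 mul_row_col mulmx0 mul0mx addr0. Qed.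

Lemma opnorm_ZL n k : opnorm (ZL C n k) <= 1.
Proof.
apply: (opnorm_le rc) => // v; by rewrite nn_mul ZL_tc ZLL -nn_qf expr1n mul1r.
Qed.
Lemma opnorm_ZR n k : opnorm (ZR C n k) <= 1.
Proof.
apply: (opnorm_le rc) => // v; by rewrite nn_mul ZR_tc ZRR -nn_qf expr1n mul1r.
Qed.

Lemma herm_block n k (X : 'M[C]_n) (Y : 'M[C]_k) : X \is hermsymmx -> Y \is hermsymmx ->
  block_mx X 0 0 Y \is hermsymmx.
Proof.
by move=> hX hY; apply: tc_herm; rewrite tr_block_mx map_block_mx !herm_tc // !tc0.
Qed.

Lemma unorm_block n k (A : 'M[V]_n) (X : 'M[C]_n) (B : 'M[V]_k) (Y : 'M[C]_k) :
  sa star A -> X \is hermsymmx -> sa star B -> Y \is hermsymmx ->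
  unorm nu (block_mx A 0 0 B) (block_mx X 0 0 Y) = Num.max (unorm nu A X) (unorm nu B Y).
Proof.
move=> hA hX hB hY.
have hAB := sa_block hs hA hB; have hXY := herm_block hX hY.
have rA := ger0_real (unorm_ge0 hA hX); have rB := ger0_real (unorm_ge0 hB hY).
have rAB := ger0_real (unorm_ge0 hAB hXY).
have ur : forall m (A' : 'M[V]_m) X' t, uset nu A' X' t -> t \is Num.real.
  by move=> m A' X' t [t0 _]; exact: gtr0_real.
apply/eqP; rewrite eq_le; apply/andP; split.
  apply: le_of_forall_gt => //; first by rewrite /Order.max; case: ifP.
  move=> s hs0; have [hsa hsb] := max_lt rA rB hs0.
  have sr : s \is Num.real.
    by apply: gtr0_real; apply: le_lt_trans hsa; exact: unorm_ge0 hA hX.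
  have [a [ha las]] := exists_below (unorm_glb hA hX) hsa (@ur _ _ _) sr.
  have [b [hb lbs]] := exists_below (unorm_glb hB hY) hsb (@ur _ _ _) sr.
  have [lb _] := unorm_glb hAB hXY; apply: lb; apply: uset_block => //.
    exact: uset_up hA hX ha las.
  exact: uset_up hB hY hb lbs.
apply: max_le.
  have := unorm_comp (ZL C n k) hAB hXY; rewrite ZL_tc.
  rewrite [X in lrmul _ X _]block_decomp lrmulD !lrmulM ZLL ZLR ZRL lrmul1 lrmul0L addr0.
  rewrite (_ : (ZL C n k)^T *m block_mx X 0 0 Y *m ZL C n k = X); last first.
    by rewrite /ZL tr_col_mx trmx1 trmx0 mul_row_block mul_row_col ?mulmx1 ?mul1mx ?mulmx0 ?mul0mx ?addr0 ?add0r.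
  move=> h; apply: le_trans h _; rewrite -[X in _ <= X]mul1r ler_wpM2r //.
    exact: unorm_ge0.
  by rewrite exprn_ile1 ?(opnorm_ge0 rc) ?opnorm_ZL.
have := unorm_comp (ZR C n k) hAB hXY; rewrite ZR_tc.
rewrite [X in lrmul _ X _]block_decomp lrmulD !lrmulM ZRR ZLR ZRL lrmul1 lrmul0L add0r.
rewrite (_ : (ZR C n k)^T *m block_mx X 0 0 Y *m ZR C n k = Y); last first.
  by rewrite /ZR tr_col_mx trmx1 trmx0 mul_row_block mul_row_col ?mulmx1 ?mul1mx ?mulmx0 ?mul0mx ?addr0 ?add0r.
move=> h; apply: le_trans h _; rewrite -[X in _ <= X]mul1r ler_wpM2r //.
  exact: unorm_ge0.
by rewrite exprn_ile1 ?(opnorm_ge0 rc) ?opnorm_ZR.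
Qed.

End Main1.

Theorem lemma3p8 (C : numClosedFieldType) (V : lmodType C) (star : V -> V)
  (nu : forall n, 'M[V]_n -> C) :
  real_complete C -> is_star star -> Linf_MOS star nu ->
  (forall n (A : 'M[V]_n) (X : 'M[C]_n), sa star A -> X \is hermsymmx ->
     (exists t, uset nu A X t) /\
     is_glb (uset nu A X) (unorm nu A X) /\ 0 <= unorm nu A X) /\
  (forall n k (A : 'M[V]_n) (X : 'M[C]_n) (B : 'M[V]_k) (Y : 'M[C]_k)
          (Z : 'M[C]_(n, k)),
     sa star A -> X \is hermsymmx -> sa star B -> Y \is hermsymmx ->
     unorm nu (block_mx A 0 0 B) (block_mx X 0 0 Y)
       = Num.max (unorm nu A X) (unorm nu B Y) /\
     unorm nu (lrmul (Z ^t*) A Z) (Z ^t* *m X *m Z) <= opnorm Z ^+ 2 * unorm nu A X).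
Proof.
move=> rc hs hL; split.
  move=> n A X hA hX; split; first exact: (uset_nonempty rc hL hA hX).
  split; [exact: (unorm_glb rc hL hA hX) | exact: (unorm_ge0 rc hL hA hX)].
move=> n k A X B Y Z hA hX hB hY; split.
  exact: (unorm_block rc hs hL hA hX hB hY).
exact: (unorm_comp rc hs hL Z hA hX).
Qed.
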